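(* Let $S\subset\mathbb{R}^3$ be a surface foliated by circles (or arcs of circles) contained in planes parallel to the $xy$-plane, and let $\phi(x,y,z)=z$. Suppose that the $\phi$-mean curvature $H_\phi$ of $S$ is a nonzero constant. Then $S$ is a surface of revolution whose axis is parallel to the $z$-axis.
   Context: For a smooth oriented surface $S$ with unit normal $N=(N_1,N_2,N_3)$, $H$ is the mean curvature normalized so that the mean curvature vector is $\Delta_S X=2HN$. For the density $e^{\phi}$ with $\phi(x,y,z)=z$, the $\phi$-mean curvature is $H_\phi=H-\tfrac12\frac{d\phi}{dN}=H-\tfrac12 N_3$. Locally such an $S$ is parametrized as $X(s,t)=(a(s),b(s),s)+r(s)(\cos t,\sin t,0)$ with $a,b,r$ smooth, $r>0$, $t$ in an interval. The result is local. *)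

(* Defs.v *)
From Stdlib Require Export Reals.
Open Scope R_scope.

Record R3 := mkR3 { v1 : R; v2 : R; v3 : R }.

Definition dot (u v : R3) : R := v1 u * v1 v + v2 u * v2 v + v3 u * v3 v.
Definition cross (u v : R3) : R3 :=
  mkR3 (v2 u * v3 v - v3 u * v2 v)
       (v3 u * v1 v - v1 u * v3 v)
       (v1 u * v2 v - v2 u * v1 v).
Definition vnorm (u : R3) : R := sqrt (dot u u).
Definition vscale (k : R) (u : R3) : R3 := mkR3 (k * v1 u) (k * v2 u) (k * v3 u).

Definition smooth_on (f : R -> R) (lo hi : R) : Prop :=
  exists D : nat -> R -> R,
    (forall x, D O x = f x) /\
    (forall (n : nat) (x : R), lo < x < hi -> derivable_pt_lim (D n) x (D (S n) x)).

Definition partial_s (X : R -> R -> R3) (s t : R) (v : R3) : Prop :=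
  derivable_pt_lim (fun u => v1 (X u t)) s (v1 v) /\
  derivable_pt_lim (fun u => v2 (X u t)) s (v2 v) /\
  derivable_pt_lim (fun u => v3 (X u t)) s (v3 v).

Definition partial_t (X : R -> R -> R3) (s t : R) (v : R3) : Prop :=
  derivable_pt_lim (fun u => v1 (X s u)) t (v1 v) /\
  derivable_pt_lim (fun u => v2 (X s u)) t (v2 v) /\
  derivable_pt_lim (fun u => v3 (X s u)) t (v3 v).

Definition unit_normal (Xs Xt : R3) : R3 :=
  vscale (/ vnorm (cross Xs Xt)) (cross Xs Xt).

(* Mean curvature, normalized so that Delta_S X = 2 H N:
   H = (e G - 2 f F + g E) / (2 (E G - F^2)). *)
Definition mean_curv (Xs Xt Xss Xst Xtt : R3) : R :=
  let N := unit_normal Xs Xt in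
  let E := dot Xs Xs in let F := dot Xs Xt in let G := dot Xt Xt in
  let e := dot Xss N in let f := dot Xst N in let g := dot Xtt N in
  (e * G - 2 * f * F + g * E) / (2 * (E * G - F * F)).

Definition phi_mean_curv (Xs Xt Xss Xst Xtt : R3) : R :=
  mean_curv Xs Xt Xss Xst Xtt - / 2 * v3 (unit_normal Xs Xt).

Definition circ_param (a b r : R -> R) (s t : R) : R3 :=
  mkR3 (a s + r s * cos t) (b s + r s * sin t) s.

(* Main.v *)
Require Import Defs.
From Stdlib Require Import Reals Nsatz Lra Lia FunctionalExtensionality.
Open Scope R_scope.

Inductive ip : nat -> (R -> R) -> Prop :=
| ip0 c : ip 0 (fun _ => c)
| ipS n f c : ip n f -> ip (S n) (fun x => x * f x + c).

Lemma ip_ext n f g : ip n f -> (forall x, f x = g x) -> ip n g.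
Proof. intros H E. replace g with f; auto. apply functional_extensionality; auto. Qed.

Lemma ip_S n f : ip n f -> ip (S n) f.
Proof.
  induction 1.
  - apply ip_ext with (fun x => x * (fun _ => 0) x + c). constructor. constructor.
    intros; simpl; ring.
  - constructor; auto.
Qed.

Lemma ip_le n m f : (n <= m)%nat -> ip n f -> ip m f.
Proof. induction 1; auto. intros; apply ip_S; auto. Qed.

Lemma ip_const n c : ip n (fun _ => c).
Proof. apply ip_le with 0%nat. apply Nat.le_0_l. constructor. Qed.

Lemma ip_scal n f k : ip n f -> ip n (fun x => k * f x).
Proof.
  induction 1.
  - constructor.
  - apply ip_ext with (fun x => x * (fun y => k * f y) x + k * c). constructor; auto.
    intros; simpl; ring.
Qed.

Lemma ip_add n f g : ip n f -> ip n g -> ip n (fun x => f x + g x).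
Proof.
  intros H; revert g; induction H; intros g Hg; inversion Hg; subst.
  - apply ip_ext with (fun _ => c + c0). constructor. auto.
  - apply ip_ext with (fun x => x * (fun y => f y + f0 y) x + (c + c0)).
    constructor; auto. intros; simpl; ring.
Qed.

Lemma ip_add' n m f g : ip n f -> ip m g -> ip (n + m) (fun x => f x + g x).
Proof.
  intros H1 H2; apply ip_add; [apply ip_le with n | apply ip_le with m]; auto; lia.
Qed.

Lemma ip_mul n m f g : ip n f -> ip m g -> ip (n + m) (fun x => f x * g x).
Proof.
  intros H; revert m g; induction H; intros m g Hg.
  - apply ip_ext with (fun x => c * g x). apply ip_scal; auto. intros; ring.
  - apply ip_ext with (fun x => (x * (fun y => f y * g y) x + 0) + c * g x).
    apply ip_add. simpl. constructor. auto.
    apply ip_scal. apply ip_le with m; [lia|auto].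
    intros; simpl; ring.
Qed.

Lemma ip_id : ip 1 (fun x => x).
Proof. apply ip_ext with (fun x => x * (fun _ => 1) x + 0). constructor; constructor.
  intros; ring. Qed.

Lemma ip_deriv n f : ip n f -> exists f', (forall x, derivable_pt_lim f x (f' x)) /\ ip (pred n) f'.
Proof.
  induction 1.
  - exists (fun _ => 0). split. intros; apply derivable_pt_lim_const. constructor.
  - destruct IHip as [g' [Hg' Ig']].
    exists (fun x => f x + x * g' x). split.
    + intros x.
      apply derivable_pt_lim_ext with (fun x => (fun y => y) x * f x + (fun _ => c) x).
      intros; reflexivity.
      replace (f x + x * g' x) with ((1 * f x + x * g' x) + 0) by ring.
      apply derivable_pt_lim_plus. apply derivable_pt_lim_mult; auto.
      apply derivable_pt_lim_id. apply derivable_pt_lim_const.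
    + simpl. destruct n.
      * inversion H; subst. apply ip_ext with (fun _ => c0). constructor.
        intros. simpl in Ig'. inversion Ig'; subst.
        (* g' is constant; but derivative of constant is 0 *)
        assert (c1 = 0).
        { apply (uniqueness_limite (fun _ => c0) 0 c1 0). apply (Hg' 0).
          apply derivable_pt_lim_const. }
        subst; ring.
      * apply ip_add. auto.
        apply ip_ext with (fun x => x * g' x + 0). constructor. auto. intros; ring.
Qed.

Lemma deriv_loc_zero f x l a b : a < x < b -> (forall y, a < y < b -> f y = 0) ->
  derivable_pt_lim f x l -> l = 0.
Proof.
  intros Hx Hz Hd.
  apply (uniqueness_limite f x l 0); auto.
  apply derivable_pt_lim_locally_ext with (fun _ => 0) a b; auto.
  intros; symmetry; auto. apply derivable_pt_lim_const.
Qed.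

Lemma ip_vanish n f a b : ip n f -> a < b -> (forall x, a < x < b -> f x = 0) ->
  forall x, f x = 0.
Proof.
  revert f; induction n; intros f Hf Hab Hz x.
  - inversion Hf; subst. apply (Hz ((a+b)/2)). lra.
  - destruct (ip_deriv _ _ Hf) as [f' [Hd If']].
    assert (Z : forall y, f' y = 0).
    { apply (IHn f' If' Hab). intros y Hy. eapply deriv_loc_zero; eauto. }
    assert (forall u v, u < v -> f v = f u).
    { intros u v Huv. destruct (MVT_cor2 f f' u v Huv) as [w [Hw _]].
      intros; auto. rewrite Z in Hw. lra. }
    rewrite <- (Hz ((a+b)/2)) by lra.
    destruct (Rtotal_order x ((a+b)/2)) as [h|[h|h]]; [apply H in h; lra | subst; auto | auto].
Qed.

Definition isp (f : R -> R) := exists n, ip n f.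
Lemma isp_id : isp (fun x => x). Proof. exists 1%nat; apply ip_id. Qed.
Lemma isp_const c : isp (fun _ => c). Proof. exists 0%nat; constructor. Qed.
Lemma isp_add f g : isp f -> isp g -> isp (fun x => f x + g x).
Proof. intros [n Hf] [m Hg]; exists (n+m)%nat; apply ip_add'; auto. Qed.
Lemma isp_mul f g : isp f -> isp g -> isp (fun x => f x * g x).
Proof. intros [n Hf] [m Hg]; exists (n+m)%nat; apply ip_mul; auto. Qed.
Lemma isp_ext f g : isp f -> (forall x, f x = g x) -> isp g.
Proof. intros [n Hf] E; exists n; eapply ip_ext; eauto. Qed.
Lemma isp_opp f : isp f -> isp (fun x => - f x).
Proof. intros H. apply isp_ext with (fun x => (fun _ => -1) x * f x).
  apply isp_mul; auto; apply isp_const. intros; simpl; ring. Qed.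
Lemma isp_sub f g : isp f -> isp g -> isp (fun x => f x - g x).
Proof. intros. apply isp_add; auto. apply isp_opp; auto. Qed.
Lemma isp_pow f n : isp f -> isp (fun x => f x ^ n).
Proof. intros H; induction n. simpl; apply isp_const.
  simpl. apply isp_mul; auto. Qed.
Lemma isp_vanish f a b : isp f -> a < b -> (forall x, a < x < b -> f x = 0) ->
  forall x, f x = 0.
Proof. intros [n H]; eapply ip_vanish; eauto. Qed.

Ltac isp_tac := repeat (first [apply isp_id | apply isp_const | apply isp_add | apply isp_sub
  | apply isp_mul | apply isp_opp | apply isp_pow]).

Lemma global_vanish G0 G1 ca sa t0 t1 : isp G0 -> isp G1 -> ca*ca + sa*sa = 1 -> t0 < t1 ->
  (forall t, t0 < t < t1 ->
     G0 (ca * cos t + sa * sin t) + (- sa * cos t + ca * sin t) * G1 (ca * cos t + sa * sin t) = 0) ->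
  forall z, G0 z = 0 /\ G1 z = 0.
Proof.
  intros I0 I1 Hcs Ht Hid.
  set (X := fun t => ca * cos t + sa * sin t).
  set (Y := fun t => - sa * cos t + ca * sin t).
  assert (XY : forall t, X t * X t + Y t * Y t = 1).
  { intros t; unfold X, Y. pose proof (sin2_cos2 t). unfold Rsqr in H. clear - Hcs H. nsatz. }
  assert (dX : forall t, derivable_pt_lim X t (- Y t)).
  { intros t. unfold X, Y.
    replace (- (- sa * cos t + ca * sin t)) with (ca * (- sin t) + sa * cos t) by ring.
    apply derivable_pt_lim_plus; apply derivable_pt_lim_scal.
    apply derivable_pt_lim_cos. apply derivable_pt_lim_sin. }
  assert (dY : forall t, derivable_pt_lim Y t (X t)).
  { intros t. unfold X, Y.
    replace (ca * cos t + sa * sin t) with (- sa * (- sin t) + ca * cos t) by ring.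
    apply derivable_pt_lim_plus; apply derivable_pt_lim_scal.
    apply derivable_pt_lim_cos. apply derivable_pt_lim_sin. }
  assert (cX : continuity X).
  { intros t. apply (derivable_continuous_pt X t (exist _ _ (dX t))). }
  assert (NC : exists ta tb, t0 < ta < t1 /\ t0 < tb < t1 /\ ta < tb /\ X ta <> X tb).
  { apply Classical_Prop.NNPP; intros Hn.
    set (m := (t0+t1)/2).
    assert (Xc : forall t, t0 < t < t1 -> X t = X m).
    { intros t Ht'. destruct (Rtotal_order t m) as [h|[h|h]].
      - apply Classical_Prop.NNPP; intro Hne. apply Hn. exists t, m. unfold m in *; repeat split; try lra; auto.
      - subst; auto.
      - apply Classical_Prop.NNPP; intro Hne. apply Hn. exists m, t. unfold m in *; repeat split; try lra; auto. }
    assert (Y0 : forall t, t0 < t < t1 -> Y t = 0).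
    { intros t Ht'.
      assert (- Y t = 0).
      { apply (deriv_loc_zero (fun y => X y - X m) t (- Y t) t0 t1); auto.
        intros; rewrite Xc; auto; ring.
        replace (- Y t) with (- Y t - 0) by ring.
        apply derivable_pt_lim_minus; auto. apply derivable_pt_lim_const. }
      lra. }
    assert (X0 : X m = 0).
    { apply (deriv_loc_zero Y m (X m) t0 t1); auto. unfold m; lra. }
    pose proof (XY m). rewrite X0, Y0 in H by (unfold m; lra). lra. }
  destruct NC as [ta [tb [Ha [Hb [Hab Hne]]]]].
  set (H := fun z => G0 z * G0 z - (1 - z*z) * (G1 z * G1 z)).
  assert (IH : isp H) by (unfold H; isp_tac; auto).
  assert (HX : forall t, t0 < t < t1 -> H (X t) = 0).
  { intros t Ht'. pose proof (Hid t Ht'). fold (X t) (Y t) in H0. unfold H.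
    pose proof (XY t).
    replace (G0 (X t)) with (- Y t * G1 (X t)) by lra.
    replace (1 - X t * X t) with (Y t * Y t) by lra. ring. }
  assert (Hz : forall z, H z = 0).
  { apply (isp_vanish H (Rmin (X ta) (X tb)) (Rmax (X ta) (X tb))); auto.
    unfold Rmin, Rmax; destruct (Rle_dec (X ta) (X tb)); lra.
    intros z Hz.
    destruct (IVT_cor (fun t => X t - z) ta tb) as [t [Ht' Hxt]].
    { intros t. apply continuity_pt_minus. apply cX. apply continuity_pt_const. intros u v; auto. }
    lra.
    { cbv beta. unfold Rmin, Rmax in Hz; destruct (Rle_dec (X ta) (X tb)); nra. }
    replace z with (X t) by lra. apply HX. lra. }
  assert (Big : forall z, 1 < z -> G0 z = 0 /\ G1 z = 0).
  { intros z Hz1. pose proof (Hz z). unfold H in H0.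
    assert (0 <= G0 z * G0 z) by nra. assert (0 <= G1 z * G1 z) by nra.
    assert (z*z - 1 > 0) by nra.
    assert (0 <= (z*z-1) * (G1 z * G1 z)) by (apply Rmult_le_pos; lra).
    assert (G0 z * G0 z = 0) by nra.
    assert ((z*z-1) * (G1 z * G1 z) = 0) by nra.
    assert (G1 z * G1 z = 0).
    { destruct (Rmult_integral _ _ H6); lra. }
    split; [destruct (Rmult_integral _ _ H5) | destruct (Rmult_integral _ _ H7)]; auto. }
  intros z. split.
  - apply (isp_vanish G0 1 2); auto; [lra|]. intros; apply Big; lra.
  - apply (isp_vanish G1 1 2); auto; [lra|]. intros; apply Big; lra.
Qed.

Lemma key_identity p q r r1 a2 b2 r2 c s k0 u :
  c*c + s*s = 1 -> 0 < r -> u = p*c + q*s + r1 ->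
  phi_mean_curv (mkR3 (p + r1*c) (q + r1*s) 1) (mkR3 (-(r*s)) (r*c) 0)
    (mkR3 (a2 + r2*c) (b2 + r2*s) 0) (mkR3 (-(r1*s)) (r1*c) 0)
    (mkR3 (-(r*c)) (-(r*s)) 0) = k0 ->
  (1 + p*p + q*q + r1*r1 + 2*r1*(p*c+q*s)) - r*(a2*c + b2*s + r2) - r*u*(1+u*u)
   = 2*k0*r*(1+u*u)*sqrt (1+u*u).
Proof.
  intros Hcs Hr Hu H.
  assert (HW : 0 < 1+u*u) by nra.
  assert (HS : 0 < sqrt (1+u*u)) by (apply sqrt_lt_R0; auto).
  assert (HSS : sqrt (1+u*u) * sqrt (1+u*u) = 1+u*u) by (apply sqrt_sqrt; lra).
  revert H HS HSS. generalize (sqrt (1+u*u)). intros S H HS HSS.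
  unfold phi_mean_curv, mean_curv, unit_normal in H.
  assert (hc : cross (mkR3 (p + r1*c) (q + r1*s) 1) (mkR3 (-(r*s)) (r*c) 0)
     = mkR3 (-(r*c)) (-(r*s)) (r*u)).
  { unfold cross; simpl; f_equal; [ring|ring|subst u; clear - Hcs; nsatz]. }
  rewrite hc in H.
  assert (hn : vnorm (mkR3 (-(r*c)) (-(r*s)) (r*u)) = r*S).
  { unfold vnorm, dot; simpl.
    replace (- (r * c) * - (r * c) + - (r * s) * - (r * s) + r * u * (r * u)) with ((r*S)*(r*S)).
    apply sqrt_square; nra. subst u; clear - Hcs HSS; nsatz. }
  rewrite hn in H.
  unfold vscale, dot in H; simpl in H.

  match type of H with context [ _ / (2 * ?D) ] =>
    assert (HD : D = r*r*(1+u*u)) by (subst u; clear - Hcs; nsatz); rewrite HD in H end.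
  subst k0.
  field_simplify_eq. 2:{ repeat split; apply Rgt_not_eq; lra. } clear - Hcs. simpl. nsatz.
Qed.

Lemma final_alg r k rho r1 lam r2 m n :
  0 < r -> k <> 0 -> 0 < rho ->
  n = 1 + rho*rho - r1*r1 + r*lam*r1/rho - r*r2 ->
  m = 2*r1 - r*lam/rho - r ->
  (forall z, (1 + rho*rho + r1*r1 + 2*r1*rho*z - r*(lam*z + r2) - r*(rho*z+r1)*(1+(rho*z+r1)*(rho*z+r1)))^2
     = k^2 * (1 + (rho*z+r1)*(rho*z+r1))^3) -> False.
Proof.
  intros Hr Hk Hrho Hn Hm HQ.
  assert (Ev : forall u, (- r*u^3 + m*u + n)^2 = k^2*(1+u*u)^3).
  { intros u. specialize (HQ ((u - r1)/rho)).
    replace (rho * ((u - r1) / rho) + r1) with u in HQ by (field; lra).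
    rewrite <- HQ. f_equal. subst m n. field. lra. }
  pose proof (Ev 0) as E0. pose proof (Ev 1) as E1. pose proof (Ev (-1)) as E2.
  pose proof (Ev 2) as E3. pose proof (Ev (-2)) as E4.
  assert (A1 : n * (m - r) = 0) by nra.
  assert (A2 : n * (2*m - 8*r) = 0) by nra.
  assert (n = 0).
  { destruct (Rmult_integral _ _ A1); auto. destruct (Rmult_integral _ _ A2); auto. lra. }
  subst n. assert (k^2 = 0) by nra. nra.
Qed.

Lemma pointwise_zero p q r r1 a2 b2 r2 k t0 t1 : t0 < t1 -> 0 < r -> k <> 0 ->
  (forall t, t0 < t < t1 ->
     ((1 + p*p + q*q + r1*r1 + 2*r1*(p*cos t+q*sin t)) - r*(a2*cos t + b2*sin t + r2)
       - r*(p*cos t + q*sin t + r1)*(1+(p*cos t + q*sin t + r1)*(p*cos t + q*sin t + r1)))^2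
     = k^2 * (1+(p*cos t + q*sin t + r1)*(p*cos t + q*sin t + r1))^3) ->
  p = 0 /\ q = 0.
Proof.
  intros Ht Hr Hk Hid.
  destruct (Req_dec (p*p+q*q) 0) as [H0|H0].
  { split; nra. }
  exfalso.
  assert (Hpq : 0 < p*p+q*q) by nra.
  set (rho := sqrt (p*p+q*q)).
  assert (Hrho : 0 < rho) by (apply sqrt_lt_R0; auto).
  assert (Hrr : rho*rho = p*p+q*q) by (apply sqrt_sqrt; lra).
  clearbody rho.
  set (ca := p/rho). set (sa := q/rho).
  assert (Hp : p = rho*ca) by (unfold ca; field; lra).
  assert (Hq : q = rho*sa) by (unfold sa; field; lra).
  assert (Hcs : ca*ca + sa*sa = 1).
  { unfold ca, sa. apply (Rmult_eq_reg_r (rho*rho)). field_simplify; lra. nra. }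
  clearbody ca sa. subst p q.
  set (lam := a2*ca + b2*sa). set (mu := - a2*sa + b2*ca).
  set (Q := fun z => 1 + rho*rho + r1*r1 + 2*r1*rho*z - r*(lam*z + r2) - r*(rho*z+r1)*(1+(rho*z+r1)*(rho*z+r1))).
  set (G0 := fun z => Q z * Q z + r*r*mu*mu*(1 - z*z) - k^2*(1+(rho*z+r1)*(rho*z+r1))^3).
  set (G1 := fun z => -2*r*mu*Q z).
  assert (Gz : forall z, G0 z = 0 /\ G1 z = 0).
  { apply (global_vanish G0 G1 ca sa t0 t1); auto.
    - unfold G0, Q; isp_tac.
    - unfold G1, Q; isp_tac.
    - intros t Htt. specialize (Hid t Htt).
      pose proof (sin2_cos2 t) as Hsc. unfold Rsqr in Hsc.
      revert Hid Hsc. generalize (cos t) (sin t). intros c s Hid Hsc.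
      unfold G0, G1, Q, lam, mu.
      clear - Hsc Hcs Hid. simpl in *. nsatz. }
  assert (Hmq : forall z, mu * Q z = 0).
  { intros z. destruct (Gz z) as [_ H1]. unfold G1 in H1.
    assert (-2*r <> 0) by lra.
    apply (Rmult_eq_reg_l (-2*r)); auto. lra. }
  destruct (Req_dec mu 0) as [Hmu|Hmu].
  - apply (final_alg r k rho r1 lam r2 (2*r1 - r*lam/rho - r) (1 + rho*rho - r1*r1 + r*lam*r1/rho - r*r2)); auto.
    intros z. destruct (Gz z) as [H1 _]. unfold G0 in H1. rewrite Hmu in H1.
    unfold Q in H1. apply Rminus_diag_uniq. rewrite <- H1. ring.
  - assert (Q1 : Q 1 = 0).
    { destruct (Rmult_integral _ _ (Hmq 1)); auto; contradiction. }
    destruct (Gz 1) as [H1 _]. unfold G0 in H1. rewrite Q1 in H1.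
    assert (W : 1 <= 1 + (rho*1+r1)*(rho*1+r1)) by (pose proof (Rle_0_sqr (rho*1+r1)); unfold Rsqr in *; lra).
    assert (1 <= (1 + (rho*1+r1)*(rho*1+r1))^3).
    { replace 1 with (1^3) at 1 by ring. apply pow_incr. lra. }
    assert (Hk2 : 0 < k^2) by (rewrite <- Rsqr_pow2; apply Rsqr_pos_lt; auto).
    assert (0 < k^2 * (1 + (rho*1+r1)*(rho*1+r1))^3) by (apply Rmult_lt_0_compat; lra).
    replace (1 - 1*1) with 0 in H1 by ring. lra.
Qed.

Lemma R3eta v : v = mkR3 (v1 v) (v2 v) (v3 v).
Proof. destruct v; reflexivity. Qed.

Lemma smooth_d f lo hi : smooth_on f lo hi -> exists D : nat -> R -> R,
  (forall x, lo < x < hi -> derivable_pt_lim f x (D 1%nat x)) /\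
  (forall x, lo < x < hi -> derivable_pt_lim (D 1%nat) x (D 2%nat x)).
Proof.
  intros [D [H0 H1]]. exists D. split; intros x Hx; auto.
  apply derivable_pt_lim_ext with (D 0%nat); auto.
Qed.

Lemma dlin f g f' g' ct x : derivable_pt_lim f x f' -> derivable_pt_lim g x g' ->
  derivable_pt_lim (fun u => f u + g u * ct) x (f' + g' * ct).
Proof.
  intros. replace (f' + g' * ct) with (f' + (g' * ct + g x * 0)) by ring.
  apply derivable_pt_lim_plus; auto. apply derivable_pt_lim_mult; auto.
  apply derivable_pt_lim_const.
Qed.

Theorem theorem6 (a b r : R -> R) (s0 s1 t0 t1 : R) (c : R)
  (Xs Xt Xss Xst Xtt : R -> R -> R3) :
  s0 < s1 -> t0 < t1 ->
  smooth_on a s0 s1 -> smooth_on b s0 s1 -> smooth_on r s0 s1 ->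
  (forall s, s0 < s < s1 -> 0 < r s) ->
  (forall s t, s0 < s < s1 -> t0 < t < t1 ->
     partial_s (circ_param a b r) s t (Xs s t) /\
     partial_t (circ_param a b r) s t (Xt s t) /\
     partial_s Xs s t (Xss s t) /\
     partial_t Xs s t (Xst s t) /\
     partial_t Xt s t (Xtt s t)) ->
  c <> 0 ->
  (forall s t, s0 < s < s1 -> t0 < t < t1 ->
     phi_mean_curv (Xs s t) (Xt s t) (Xss s t) (Xst s t) (Xtt s t) = c) ->
  exists x0 y0 : R, forall s, s0 < s < s1 -> a s = x0 /\ b s = y0.
Proof.
  intros Hs Ht Sa Sb Sr Hr HX Hc Hphi.
  destruct (smooth_d _ _ _ Sa) as [Da [Da1 Da2]].
  destruct (smooth_d _ _ _ Sb) as [Db [Db1 Db2]].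
  destruct (smooth_d _ _ _ Sr) as [Dr [Dr1 Dr2]].
  assert (EXs : forall s t, s0 < s < s1 -> t0 < t < t1 ->
     Xs s t = mkR3 (Da 1%nat s + Dr 1%nat s * cos t) (Db 1%nat s + Dr 1%nat s * sin t) 1).
  { intros s t Hs' Ht'. destruct (HX s t Hs' Ht') as [[P1 [P2 P3]] _].
    rewrite (R3eta (Xs s t)). f_equal.
    - apply (uniqueness_limite _ _ _ _ P1). apply dlin; auto.
    - apply (uniqueness_limite _ _ _ _ P2). apply dlin; auto.
    - apply (uniqueness_limite _ _ _ _ P3). apply derivable_pt_lim_id. }
  assert (EXt : forall s t, s0 < s < s1 -> t0 < t < t1 ->
     Xt s t = mkR3 (- (r s * sin t)) (r s * cos t) 0).
  { intros s t Hs' Ht'. destruct (HX s t Hs' Ht') as [_ [[P1 [P2 P3]] _]].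
    rewrite (R3eta (Xt s t)). f_equal.
    - apply (uniqueness_limite _ _ _ _ P1).
      replace (- (r s * sin t)) with (0 + (r s * (- sin t))) by ring.
      apply derivable_pt_lim_plus. apply derivable_pt_lim_const.
      apply derivable_pt_lim_scal. apply derivable_pt_lim_cos.
    - apply (uniqueness_limite _ _ _ _ P2).
      replace (r s * cos t) with (0 + (r s * cos t)) by ring.
      apply derivable_pt_lim_plus. apply derivable_pt_lim_const.
      apply derivable_pt_lim_scal. apply derivable_pt_lim_sin.
    - apply (uniqueness_limite _ _ _ _ P3). apply derivable_pt_lim_const. }
  assert (EXss : forall s t, s0 < s < s1 -> t0 < t < t1 ->
     Xss s t = mkR3 (Da 2%nat s + Dr 2%nat s * cos t) (Db 2%nat s + Dr 2%nat s * sin t) 0).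
  { intros s t Hs' Ht'. destruct (HX s t Hs' Ht') as [_ [_ [[P1 [P2 P3]] _]]].
    rewrite (R3eta (Xss s t)). f_equal.
    - apply (uniqueness_limite _ _ _ _ P1).
      apply derivable_pt_lim_locally_ext with (fun u => Da 1%nat u + Dr 1%nat u * cos t) s0 s1; auto.
      intros z Hz; rewrite EXs; auto. apply dlin; auto.
    - apply (uniqueness_limite _ _ _ _ P2).
      apply derivable_pt_lim_locally_ext with (fun u => Db 1%nat u + Dr 1%nat u * sin t) s0 s1; auto.
      intros z Hz; rewrite EXs; auto. apply dlin; auto.
    - apply (uniqueness_limite _ _ _ _ P3).
      apply derivable_pt_lim_locally_ext with (fun u => 1) s0 s1; auto.
      intros z Hz; rewrite EXs; auto. apply derivable_pt_lim_const. }
  assert (EXst : forall s t, s0 < s < s1 -> t0 < t < t1 ->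
     Xst s t = mkR3 (- (Dr 1%nat s * sin t)) (Dr 1%nat s * cos t) 0).
  { intros s t Hs' Ht'. destruct (HX s t Hs' Ht') as [_ [_ [_ [[P1 [P2 P3]] _]]]].
    rewrite (R3eta (Xst s t)). f_equal.
    - apply (uniqueness_limite _ _ _ _ P1).
      apply derivable_pt_lim_locally_ext with (fun u => Da 1%nat s + Dr 1%nat s * cos u) t0 t1; auto.
      intros z Hz; rewrite EXs; auto.
      replace (- (Dr 1%nat s * sin t)) with (0 + (Dr 1%nat s * (- sin t))) by ring.
      apply derivable_pt_lim_plus. apply derivable_pt_lim_const.
      apply derivable_pt_lim_scal. apply derivable_pt_lim_cos.
    - apply (uniqueness_limite _ _ _ _ P2).
      apply derivable_pt_lim_locally_ext with (fun u => Db 1%nat s + Dr 1%nat s * sin u) t0 t1; auto.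
      intros z Hz; rewrite EXs; auto.
      replace (Dr 1%nat s * cos t) with (0 + (Dr 1%nat s * cos t)) by ring.
      apply derivable_pt_lim_plus. apply derivable_pt_lim_const.
      apply derivable_pt_lim_scal. apply derivable_pt_lim_sin.
    - apply (uniqueness_limite _ _ _ _ P3).
      apply derivable_pt_lim_locally_ext with (fun u => 1) t0 t1; auto.
      intros z Hz; rewrite EXs; auto. apply derivable_pt_lim_const. }
  assert (EXtt : forall s t, s0 < s < s1 -> t0 < t < t1 ->
     Xtt s t = mkR3 (- (r s * cos t)) (- (r s * sin t)) 0).
  { intros s t Hs' Ht'. destruct (HX s t Hs' Ht') as [_ [_ [_ [_ [P1 [P2 P3]]]]]].
    rewrite (R3eta (Xtt s t)). f_equal.
    - apply (uniqueness_limite _ _ _ _ P1).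
      apply derivable_pt_lim_locally_ext with (fun u => - (r s * sin u)) t0 t1; auto.
      intros z Hz; rewrite EXt; auto.
      replace (- (r s * cos t)) with (- (r s * cos t)) by ring.
      apply derivable_pt_lim_opp. apply derivable_pt_lim_scal. apply derivable_pt_lim_sin.
    - apply (uniqueness_limite _ _ _ _ P2).
      apply derivable_pt_lim_locally_ext with (fun u => r s * cos u) t0 t1; auto.
      intros z Hz; rewrite EXt; auto.
      replace (- (r s * sin t)) with (r s * (- sin t)) by ring.
      apply derivable_pt_lim_scal. apply derivable_pt_lim_cos.
    - apply (uniqueness_limite _ _ _ _ P3).
      apply derivable_pt_lim_locally_ext with (fun u => 0) t0 t1; auto.
      intros z Hz; rewrite EXt; auto. apply derivable_pt_lim_const. }
  assert (Z : forall s, s0 < s < s1 -> Da 1%nat s = 0 /\ Db 1%nat s = 0).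
  { intros s Hs'.
    apply (pointwise_zero (Da 1%nat s) (Db 1%nat s) (r s) (Dr 1%nat s) (Da 2%nat s) (Db 2%nat s)
             (Dr 2%nat s) (2*c*r s) t0 t1); auto.
    { pose proof (Hr s Hs'). apply Rmult_integral_contrapositive_currified; [|lra].
      apply Rmult_integral_contrapositive_currified; lra. }
    intros t Ht'.
    pose proof (Hphi s t Hs' Ht') as HP.
    rewrite EXs, EXt, EXss, EXst, EXtt in HP by auto.
    pose proof (sin2_cos2 t) as Hsc. unfold Rsqr in Hsc.
    pose proof (key_identity _ _ _ _ _ _ _ (cos t) (sin t) _ _ ltac:(lra) (Hr s Hs') eq_refl HP) as K.
    rewrite K.
    set (u := Da 1%nat s * cos t + Db 1%nat s * sin t + Dr 1%nat s) in *.
    assert (0 <= 1 + u*u) by nra.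
    pose proof (sqrt_sqrt _ H).
    simpl. rewrite !Rmult_1_r.
    replace (2 * c * r s * (1 + u * u) * sqrt (1 + u * u) *
      (2 * c * r s * (1 + u * u) * sqrt (1 + u * u)))
      with ((2 * c * r s) * (2 * c * r s) * (1 + u * u) * (1 + u * u) * (sqrt (1 + u * u) * sqrt (1 + u * u))) by ring.
    rewrite H0. ring. }
  exists (a ((s0+s1)/2)), (b ((s0+s1)/2)).
  assert (Const : forall f D1, (forall x, s0 < x < s1 -> derivable_pt_lim f x (D1 x)) ->
     (forall x, s0 < x < s1 -> D1 x = 0) -> forall x, s0 < x < s1 -> f x = f ((s0+s1)/2)).
  { intros f D1 Hd Hz x Hx.
    assert (forall u v, s0 < u -> u < v -> v < s1 -> f v = f u).
    { intros u v Hu Huv Hv. destruct (MVT_cor2 f D1 u v Huv) as [w [Hw Hw']].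
      intros; apply Hd; lra. rewrite Hz in Hw by lra. lra. }
    destruct (Rtotal_order x ((s0+s1)/2)) as [h|[h|h]].
    - symmetry; apply H; lra.
    - subst; auto.
    - apply H; lra. }
  intros s Hs'. split.
  - apply (Const a (Da 1%nat)); auto. intros; apply Z; auto.
  - apply (Const b (Db 1%nat)); auto. intros; apply Z; auto.
Qed.
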